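(* There exists a constant $S_{\min}$ such that for all positive integers $m$ and all $p\in(0,1]$ with $mp\ge S_{\min}$, if $X\sim\mathrm{Bin}(m,p)$, then \[E[\ln(1+X)]\ge \ln(1+mp)-\frac{11}{12}\cdot\frac{1-p}{mp}.\]
   Context: $\mathrm{Bin}(m,p)$ denotes the binomial distribution with $m$ trials and success probability $p$. *)

(* Defs.v *)
From Stdlib Require Import Reals.
Open Scope R_scope.

Definition binom_pmf (m : nat) (p : R) (k : nat) : R :=
  C m k * p ^ k * (1 - p) ^ (m - k).

Definition E_ln1p_binom (m : nat) (p : R) : R :=
  sum_f_R0 (fun k => binom_pmf m p k * ln (1 + INR k)) m.

(* Main.v *)
Require Import Defs.
From Stdlib Require Import Reals.
From Stdlib Require Import Lra Lia.
From Coquelicot Require Import Coquelicot.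
Open Scope R_scope.

Lemma h_nonneg (u : R) : 0 < u ->
  0 <= ln u - 1/3 - 2*(u-1)/3 + (u-1)^2/6 + 1/(3*u).
Proof.
  intro Hu.
  set (h := fun x => ln x - 1/3 - 2*(x-1)/3 + (x-1)^2/6 + 1/(3*x)).
  set (h' := fun x => (x-1)^3/(3*x^2)).
  assert (Hd : forall c, 0 < c -> derivable_pt_lim h c (h' c)).
  { intros c Hc. apply is_derive_Reals. unfold h, h'.
    auto_derive. { lra. }
    assert (c <> 0) by lra. unfold Rdiv. field. auto. }
  assert (H1 : h 1 = 0). { unfold h. rewrite ln_1. field. }
  change (0 <= h u).
  destruct (Rtotal_order u 1) as [Hlt|[Heq|Hgt]].
  - destruct (MVT_cor2 h h' u 1 Hlt) as [c [Hc1 Hc2]].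
    { intros c Hc. apply Hd. lra. }
    assert (h' c <= 0).
    { unfold h'. apply Rmult_le_0_r.
      - assert (0 < 1 - c) by lra.
        replace ((c-1)^3) with (- (1-c)^3) by ring.
        assert (0 < (1-c)^3) by (apply pow_lt; lra). lra.
      - left. apply Rinv_0_lt_compat. assert (0 < c^2) by (apply pow_lt; lra). lra. }
    nra.
  - subst. lra.
  - destruct (MVT_cor2 h h' 1 u Hgt) as [c [Hc1 Hc2]].
    { intros c Hc. apply Hd. lra. }
    assert (0 <= h' c).
    { unfold h'. apply Rmult_le_pos.
      - assert (0 < (c-1)^3) by (apply pow_lt; lra). lra.
      - left. apply Rinv_0_lt_compat. assert (0 < c^2) by (apply pow_lt; lra). lra. }
    nra.
Qed.

Lemma ln_lower (y a : R) : 0 < y -> 0 < a ->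
  ln y >= ln a + (1/3 + 2/3*(y/a-1) - (y/a-1)^2/6 - a/(3*y)).
Proof.
  intros Hy Ha.
  assert (Hu : 0 < y/a) by (apply Rdiv_lt_0_compat; lra).
  pose proof (h_nonneg (y/a) Hu) as H.
  replace y with (a * (y/a)) at 1 by (field; lra).
  rewrite ln_mult by lra.
  replace (1/(3*(y/a))) with (a/(3*y)) in H by (field; lra).
  lra.
Qed.

Lemma C_pos n k : 0 < Binomial.C n k.
Proof.
  unfold Binomial.C. apply Rdiv_lt_0_compat. apply INR_fact_lt_0.
  apply Rmult_lt_0_compat; apply INR_fact_lt_0.
Qed.

Lemma pmf_nonneg m p k : 0 <= p <= 1 -> 0 <= binom_pmf m p k.
Proof.
  intro Hp. unfold binom_pmf.
  apply Rmult_le_pos; [apply Rmult_le_pos|].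
  - left; apply C_pos.
  - apply pow_le; lra.
  - apply pow_le; lra.
Qed.

Lemma C_shift n i : INR (S i) * Binomial.C (S n) (S i) = INR (S n) * Binomial.C n i.
Proof.
  unfold Binomial.C. replace (S n - S i)%nat with (n - i)%nat by lia.
  change (Factorial.fact (S n)) with (S n * Factorial.fact n)%nat.
  change (Factorial.fact (S i)) with (S i * Factorial.fact i)%nat.
  rewrite !mult_INR.
  pose proof (INR_fact_neq_0 n). pose proof (INR_fact_neq_0 i).
  pose proof (INR_fact_neq_0 (n - i)).
  assert (INR (S i) <> 0) by (rewrite S_INR; pose proof (pos_INR i); lra).
  field. auto.
Qed.

Lemma shift_sum n p (f : nat -> R) :
  sum_f_R0 (fun k => binom_pmf (S n) p k * (INR k * f k)) (S n)
  = INR (S n) * p * sum_f_R0 (fun j => binom_pmf n p j * f (S j)) n.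
Proof.
  rewrite decomp_sum by lia. simpl pred.
  rewrite scal_sum.
  replace (binom_pmf (S n) p 0 * (INR 0 * f 0%nat)) with 0 by (simpl; ring).
  rewrite Rplus_0_l. apply sum_eq. intros i Hi.
  unfold binom_pmf.
  replace (S n - S i)%nat with (n - i)%nat by lia.
  change (p ^ S i) with (p * p ^ i).
  transitivity ((INR (S i) * Binomial.C (S n) (S i)) * p * p ^ i * (1-p)^(n-i) * f (S i)).
  - ring.
  - rewrite C_shift. ring.
Qed.

Lemma M0 m p : sum_f_R0 (fun k => binom_pmf m p k * 1) m = 1.
Proof.
  transitivity ((p + (1 - p)) ^ m).
  - rewrite binomial. apply sum_eq. intros; unfold binom_pmf; ring.
  - replace (p + (1-p)) with 1 by ring. apply pow1.
Qed.

Lemma M1 n p : sum_f_R0 (fun k => binom_pmf (S n) p k * INR k) (S n) = INR (S n) * p.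
Proof.
  transitivity (sum_f_R0 (fun k => binom_pmf (S n) p k * (INR k * (fun _ => 1) k)) (S n)).
  - apply sum_eq; intros; ring.
  - rewrite shift_sum, M0. ring.
Qed.

Lemma M2 n p : sum_f_R0 (fun k => binom_pmf (S n) p k * (INR k * INR k)) (S n)
  = INR (S n) * p * (INR n * p + 1).
Proof.
  rewrite shift_sum. f_equal.
  transitivity (sum_f_R0 (fun j => binom_pmf n p j * INR j + binom_pmf n p j * 1) n).
  - apply sum_eq; intros; rewrite S_INR; ring.
  - rewrite sum_plus, M0. destruct n.
    + simpl. unfold binom_pmf. simpl. ring.
    + rewrite M1. ring.
Qed.

Lemma Einv m p : 0 < p <= 1 ->
  INR (S m) * p * sum_f_R0 (fun k => binom_pmf m p k * / (1 + INR k)) m <= 1.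
Proof.
  intro Hp.
  transitivity (INR (S m) * p * sum_f_R0 (fun j => binom_pmf m p j * (fun k => / INR k) (S j)) m).
  - right. f_equal. apply sum_eq; intros. rewrite S_INR. f_equal. f_equal. ring.
  - rewrite <- (shift_sum m p (fun k => / INR k)). rewrite <- (M0 (S m) p).
    apply sum_Rle. intros k _.
    apply Rmult_le_compat_l. apply pmf_nonneg; lra.
    destruct k. simpl; lra.
    rewrite Rinv_r. lra. rewrite S_INR; pose proof (pos_INR k); lra.
Qed.

Lemma lin m p c0 c1 c2 c3 :
  sum_f_R0 (fun k => binom_pmf m p k * (c0 + c1 * INR k + c2 * (INR k * INR k) + c3 * / (1 + INR k))) m
  = c0 * sum_f_R0 (fun k => binom_pmf m p k * 1) m
  + c1 * sum_f_R0 (fun k => binom_pmf m p k * INR k) m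
  + c2 * sum_f_R0 (fun k => binom_pmf m p k * (INR k * INR k)) m
  + c3 * sum_f_R0 (fun k => binom_pmf m p k * / (1 + INR k)) m.
Proof.
  rewrite !scal_sum, <- !sum_plus. apply sum_eq; intros; ring.
Qed.

Theorem theorem5 :
  exists Smin : R,
    forall (m : nat) (p : R),
      (0 < m)%nat -> 0 < p <= 1 -> INR m * p >= Smin ->
      E_ln1p_binom m p >= ln (1 + INR m * p) - 11 / 12 * ((1 - p) / (INR m * p)).
Proof.
  exists 0. intros m p Hm Hp _.
  destruct m as [|n]; [lia|].
  set (mu := INR (S n) * p).
  assert (Hmu : 0 < mu).
  { unfold mu. apply Rmult_lt_0_compat; [|lra]. rewrite S_INR; pose proof (pos_INR n); lra. }
  set (a := 1 + mu).
  assert (Ha : 0 < a) by (unfold a; lra).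
  set (c0 := ln a + 1/3 + 2/3*(1/a - 1) - (1/a - 1)^2/6).
  set (c1 := 2/(3*a) - (1/a - 1)/(3*a)).
  set (c2 := - 1/(6*a^2)).
  set (c3 := - a/3).
  assert (Hle : E_ln1p_binom (S n) p >=
     sum_f_R0 (fun k => binom_pmf (S n) p k * (c0 + c1 * INR k + c2 * (INR k * INR k) + c3 * / (1 + INR k))) (S n)).
  { unfold E_ln1p_binom. apply Rle_ge. apply sum_Rle. intros k _.
    apply Rmult_le_compat_l. apply pmf_nonneg; lra.
    assert (Hy : 0 < 1 + INR k) by (pose proof (pos_INR k); lra).
    pose proof (ln_lower (1 + INR k) a Hy Ha) as HL.
    apply Rge_le in HL. eapply Rle_trans; [|exact HL].
    right. unfold c0, c1, c2, c3. field. lra. }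
  rewrite lin, M0, M1, M2 in Hle.
  pose proof (Einv (S n) p Hp) as HE.
  set (E1 := sum_f_R0 (fun k => binom_pmf (S n) p k * / (1 + INR k)) (S n)) in *.
  fold mu in Hle.
  assert (HINR : INR n * p = mu - p) by (unfold mu; rewrite S_INR; ring).
  rewrite HINR in Hle.
  assert (Hval : c0 * 1 + c1 * mu + c2 * (mu * (mu - p + 1)) = ln a + 1/3 - mu * (1-p) / (6 * a^2)).
  { unfold c0, c1, c2, a. field. lra. }
  assert (HS : INR (S (S n)) * p = mu + p) by (unfold mu; rewrite (S_INR (S n)); ring).
  rewrite HS in HE.
  assert (HE1 : E1 <= 1 / (mu + p)).
  { apply (Rmult_le_reg_l (mu + p)). lra. field_simplify; lra. }
  assert (Hc3 : c3 * E1 >= - a / (3 * (mu + p))).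
  { unfold c3.
    replace (- a / (3 * (mu + p))) with (-a/3 * (1/(mu+p))) by (field; lra).
    assert (0 <= a/3 * (1/(mu+p) - E1)) by (apply Rmult_le_pos; lra).
    nra. }
  assert (Hq : 0 <= 1 - p) by lra.
  assert (K1 : mu * (1-p) / (6 * a^2) <= (1-p) / (6*mu)).
  { unfold Rdiv. apply (Rmult_le_reg_r (6 * a^2 * mu)).
    apply Rmult_lt_0_compat; [|lra]. nra.
    field_simplify; [|lra|lra]. unfold a. nra. }
  assert (K2 : - a / (3 * (mu + p)) = -1/3 - (1-p)/(3*(mu+p))) by (unfold a; field; lra).
  assert (K3 : (1-p)/(3*(mu+p)) <= (1-p)/(3*mu)).
  { unfold Rdiv. apply Rmult_le_compat_l. lra.
    apply Rinv_le_contravar; lra. }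
  assert (K4 : (1-p)/(6*mu) + (1-p)/(3*mu) <= 11/12 * ((1-p)/mu)).
  { replace ((1-p)/(6*mu) + (1-p)/(3*mu)) with (1/2 * ((1-p)/mu)) by (field; lra).
    apply Rmult_le_compat_r. apply Rmult_le_pos; [lra|left; apply Rinv_0_lt_compat; lra]. lra. }
  fold a. lra.
Qed.
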